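(* If either $m\ge 3$ and $k\ge 3$, or $m=2$ and $k\ge 4$, then the Spencer operator $\mathcal S^2\colon\operatorname{Hom}(\wedge^2V,\mathfrak a)\to\operatorname{Hom}(\wedge^3V,V)$ is injective.
   Context: $\mathfrak a=\mathfrak{sl}(2,\mathbb R)\times\mathfrak{gl}(m,\mathbb R)$ acting faithfully on $V=V_k\otimes W$, where $V_k=S^k(\mathbb R^2)$ is the irreducible $(k+1)$-dimensional $\mathfrak{sl}(2,\mathbb R)$-module and $W=\mathbb R^m$ the standard $\mathfrak{gl}(m,\mathbb R)$-module. $\mathcal S^2(\phi)(v_1\wedge v_2\wedge v_3)=-\phi(v_2\wedge v_3)v_1+\phi(v_1\wedge v_3)v_2-\phi(v_1\wedge v_2)v_3$. *)

(* Defs.v *)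
From mathcomp Require Import all_boot all_algebra reals.
Set Implicit Arguments. Unset Strict Implicit. Unset Printing Implicit Defensive.
Import GRing.Theory.
Local Open Scope ring_scope.

(* V_k = S^k(R^2), basis b_i = x^(k-i) y^i, i = 0..k.
   A in gl(2) acts on R^2 by A x = A00 x + A10 y, A y = A01 x + A11 y,
   and on S^k(R^2) as a derivation.  Entry (j, i) = coefficient of b_j in A.b_i. *)
Definition sym_rep {R : realType} (k : nat) (A : 'M[R]_2) : 'M[R]_(k.+1) :=
  \matrix_(j < k.+1, i < k.+1)
    (if j == i :> nat then (k - i)%:R * A 0 0 + i%:R * A 1 1
     else if j == i.+1 :> nat then (k - i)%:R * A 1 0
     else if j.+1 == i :> nat then i%:R * A 0 1
     else 0).

(* V = V_k (x) W, represented as (k+1) x m matrices: the element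
   sum_{i,a} M i a * (b_i (x) e_a). *)
Definition Vsp (R : realType) (k m : nat) := 'M[R]_(k.+1, m).

(* a = sl(2,R) x gl(m,R), carried by pairs (A, B) with tr A = 0. *)
Definition in_a {R : realType} {m : nat} (X : 'M[R]_2 * 'M[R]_m) : Prop :=
  \tr X.1 = 0.

(* the (faithful) action of (A, B) on V_k (x) W : rho_k(A) (x) 1 + 1 (x) B *)
Definition act {R : realType} {k m : nat} (X : 'M[R]_2 * 'M[R]_m)
  (v : Vsp R k m) : Vsp R k m :=
  sym_rep k X.1 *m v + v *m (X.2)^T.

Definition is_Hom2 {R : realType} {k m : nat}
  (phi : Vsp R k m -> Vsp R k m -> 'M[R]_2 * 'M[R]_m) : Prop :=
  [/\ (forall (c : R) (v1 v2 w : Vsp R k m),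
          phi (c *: v1 + v2) w = c *: phi v1 w + phi v2 w),
      (forall v w : Vsp R k m, phi v w = - phi w v) &
      (forall v w : Vsp R k m, in_a (phi v w))].

Definition spencer2 {R : realType} {k m : nat}
  (phi : Vsp R k m -> Vsp R k m -> 'M[R]_2 * 'M[R]_m)
  (v1 v2 v3 : Vsp R k m) : Vsp R k m :=
  - act (phi v2 v3) v1 + act (phi v1 v3) v2 - act (phi v1 v2) v3.

(* Main.v *)
Require Import Defs.
From mathcomp Require Import all_boot all_algebra reals.
From mathcomp Require Import ring lra zify.
Set Implicit Arguments. Unset Strict Implicit. Unset Printing Implicit Defensive.
Import GRing.Theory Num.Theory.
Local Open Scope ring_scope.
Lemma mulmx_deltaE (R : realType) n1 n2 n3 (S : 'M[R]_(n1,n2)) (l : 'I_n2) (c : 'I_n3) p q :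
  (S *m delta_mx l c) p q = (q == c)%:R * S p l.
Proof.
rewrite mxE (bigD1 l) //= big1 ?addr0.
  by rewrite mxE eqxx /= mulrC.
by move=> j /negbTE Hj; rewrite mxE Hj /= mulr0.
Qed.
Lemma delta_mulmxE (R : realType) n1 n2 n3 (S : 'M[R]_(n2,n3)) (l : 'I_n1) (c : 'I_n2) p q :
  (delta_mx l c *m S) p q = (p == l)%:R * S c q.
Proof.
rewrite mxE (bigD1 c) //= big1 ?addr0.
  by rewrite mxE eqxx andbT.
by move=> j /negbTE Hj; rewrite mxE Hj andbF mul0r.
Qed.
Section S.
Variable R : realType.
Variables k m : nat.

Definition G (A : 'M[R]_2) (B : 'M[R]_m) (l : 'I_k.+1) (c : 'I_m) p q :=
  (q == c)%:R * sym_rep k A p l + (p == l)%:R * B q c.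

Lemma act_delta (X : 'M[R]_2 * 'M[R]_m) l c p q :
  act X (delta_mx l c : Vsp R k m) p q = G X.1 X.2 l c p q.
Proof.
rewrite /act /G mxE mulmx_deltaE delta_mulmxE; congr (_ + _ * _); exact: mxE.
Qed.

Lemma sym_repB (A A' : 'M[R]_2) : sym_rep k (A - A') = sym_rep k A - sym_rep k A'.
Proof.
apply/matrixP=> i j; rewrite !mxE.
case: ifP => _; first ring.
case: ifP => _; first ring.
case: ifP => _; first ring.
by rewrite subr0.
Qed.

Lemma sym_rep0 : sym_rep k (0 : 'M[R]_2) = 0.
Proof.
apply/matrixP=> i j; rewrite !mxE.
rewrite !mulr0 addr0; by repeat case: ifP.
Qed.

Lemma GB (A A' : 'M[R]_2) (B B' : 'M[R]_m) l c p q : G (A - A') (B - B') l c p q = G A B l c p q - G A' B' l c p q.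
Proof. rewrite /G sym_repB !mxE; ring. Qed.

Lemma tr2 (A : 'M[R]_2) : \tr A = A 0 0 + A 1 1.
Proof. rewrite /mxtrace !big_ord_recl big_ord0 addr0. by congr (A _ _ + A _ _); apply: val_inj. Qed.

Definition freeP (i j : nat) (a b q : 'I_m) (p : nat) :=
  [&& p != i, p != j, (q != a) || ((p != i.+1) && (p.+1 != i)) &
      (q != b) || ((p != j.+1) && (p.+1 != j))].

Lemma vanish (A : 'M[R]_2) (B : 'M[R]_m) (i p : 'I_k.+1) a q :
  (p != i :> nat) -> (q != a) || ((p != i.+1 :> nat) && (p.+1 != i)) ->
  G A B i a p q = 0.
Proof.
move=> Hpi H; rewrite /G.
have -> : (p == i) = false by apply/negbTE; apply: contra Hpi => /eqP ->.
rewrite mul0r addr0.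
case/orP: H => [/negbTE -> | /andP [/negbTE H1 /negbTE H2]]; first by rewrite mul0r.
by rewrite mxE (negbTE Hpi) H1 H2 mulr0.
Qed.
Lemma G0 (B : 'M[R]_m) (i p : 'I_k.+1) a q :
  p != i -> G 0 B i a p q = 0.
Proof. by move=> /negbTE H; rewrite /G sym_rep0 mxE H mulr0 mul0r addr0. Qed.
Lemma G0diag (B : 'M[R]_m) (l : 'I_k.+1) c q : G 0 B l c l q = B q c.
Proof. by rewrite /G sym_rep0 mxE eqxx mulr0 add0r mul1r. Qed.
End S.
Section Alg.
Variables (R : realType) (k m : nat).
Implicit Types (A : 'M[R]_2) (p l : 'I_k.+1).

Lemma symE_diag A p l : p = l :> nat ->
  sym_rep k A p l = (k - l)%:R * A 0 0 + l%:R * A 1 1.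
Proof. by move=> H; rewrite mxE H eqxx. Qed.

Lemma symE_low A p l : p = l.+1 :> nat -> sym_rep k A p l = (k - l)%:R * A 1 0.
Proof.
move=> H; rewrite mxE H.
case: ifP => [/eqP|_]; first lia.
by rewrite eqxx.
Qed.

Lemma symE_up A p l : p.+1 = l :> nat -> sym_rep k A p l = l%:R * A 0 1.
Proof.
move=> H; rewrite mxE -H.
case: ifP => [/eqP|_]; first lia.
case: ifP => [/eqP|_]; first lia.
by rewrite eqxx.
Qed.

Lemma G_same (A : 'M[R]_2) (B : 'M[R]_m) p l q :
  p != l -> G A B l q p q = sym_rep k A p l.
Proof. by move=> /negbTE H; rewrite /G H eqxx mul1r mul0r addr0. Qed.

Lemma G_diag (A : 'M[R]_2) (B : 'M[R]_m) l q :
  G A B l q l q = sym_rep k A l l + B q q.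
Proof. by rewrite /G !eqxx !mul1r. Qed.

Lemma natr_neq0 n : (0 < n)%N -> (n%:R : R) != 0.
Proof. by rewrite pnatr_eq0 -lt0n. Qed.

Variables (A : 'M[R]_2) (B : 'M[R]_m) (fr : 'I_m -> nat -> bool).
Hypothesis HA : A 0 0 + A 1 1 = 0.
Hypothesis Hf : forall l c p q, fr q p -> G A B l c p q = 0.

Lemma ph_a q p : fr q p -> (0 < p)%N -> A 1 0 = 0.
Proof.
move=> Hq Hp.
have Hl : ((inord p.-1 : 'I_k.+1) : nat) = p.-1.
  by rewrite inordK //; have := ltn_ord p; lia.
have := Hf (inord p.-1) q Hq.
rewrite G_same; last by rewrite -val_eqE /= Hl; apply/eqP; lia.
rewrite (symE_low _ (l := inord p.-1)); last by rewrite Hl; lia.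
move/eqP; rewrite mulf_eq0 => /orP [|/eqP //].
rewrite Hl pnatr_eq0 => /eqP; have := ltn_ord p; lia.
Qed.

Lemma ph_b q p : fr q p -> (p < k)%N -> A 0 1 = 0.
Proof.
move=> Hq Hp.
have Hl : ((inord p.+1 : 'I_k.+1) : nat) = p.+1 by rewrite inordK.
have := Hf (inord p.+1) q Hq.
rewrite G_same; last by rewrite -val_eqE /= Hl; apply/eqP; lia.
rewrite (symE_up _ (l := inord p.+1)); last by rewrite Hl.
move/eqP; rewrite mulf_eq0 => /orP [|/eqP //].
by rewrite Hl pnatr_eq0.
Qed.

Lemma ph_c q p1 p2 : fr q p1 -> fr q p2 -> p1 != p2 -> A 0 0 = 0.
Proof.
move=> H1 H2 Hne.
have E1 := Hf p1 q H1; have E2 := Hf p2 q H2.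
rewrite G_diag (symE_diag _ (erefl _)) in E1.
rewrite G_diag (symE_diag _ (erefl _)) in E2.
have Hp1 := ltn_ord p1; have Hp2 := ltn_ord p2.
rewrite !natrB in E1 E2; try lia.
have HA' : A 1 1 = - A 0 0 by apply/eqP; rewrite -addr_eq0 addrC; apply/eqP.
rewrite HA' in E1 E2.
have : ((p2 : nat)%:R - (p1 : nat)%:R) * (2 * A 0 0) = 0 :> R by lra.
move/eqP; rewrite mulf_eq0 => /orP [|]; last by rewrite mulf_eq0 pnatr_eq0 /= => /eqP.
rewrite subr_eq0 eqr_nat => /eqP H; exfalso; move: Hne; rewrite -val_eqE /= H eqxx //.
Qed.
End Alg.
Lemma avoid (s : seq nat) : exists2 p, (p <= size s)%N & p \notin s.
Proof.
case: (boolP (all (fun p => p \in s) (iota 0 (size s).+1))) => [/allP H | /allPn [p Hp Hns]].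
  have := uniq_leq_size (iota_uniq 0 (size s).+1) H.
  by rewrite size_iota ltnn.
by exists p => //; move: Hp; rewrite mem_iota; lia.
Qed.

Definition fA (i j p : nat) := [&& p != i, p != j, p != i.+1 & p.+1 != i].

Lemma bf : all (fun i => all (fun j =>
   ((i == 1) && (j == 3)) || ((i == 3) && (j == 1)) ||
   has (fun p1 => has (fun p2 => (p1 != p2) &&
      ((fA i j p1 && fA i j p2) || (fA j i p1 && fA j i p2))) (iota 0 5)) (iota 0 5))
   (iota 0 5)) (iota 0 5).
Proof. by vm_compute. Qed.

Lemma notin4 (i j p : nat) : p \notin [:: i; j; i.+1; i.-1] -> fA i j p.
Proof. rewrite !inE /fA. lia. Qed.

Lemma freeP_a m (i j : nat) (a b : 'I_m) p : a != b -> freeP i j a b a p = fA i j p.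
Proof. move=> Hab; rewrite /freeP /fA eqxx (negbTE Hab) /=; lia. Qed.

Lemma freeP_b m (i j : nat) (a b : 'I_m) p : a != b -> freeP i j a b b p = fA j i p.
Proof.
move=> Hab; rewrite /freeP /fA eqxx (eq_sym b a) (negbTE Hab) /=; lia.
Qed.

Lemma comb k m (Hkm : (3 <= m)%N /\ (3 <= k)%N \/ m = 2%N /\ (4 <= k)%N)
  (i j : 'I_k.+1) (a b : 'I_m) :
  (exists q : 'I_m, exists p1 p2 : 'I_k.+1,
      [/\ p1 != p2, freeP i j a b q p1 & freeP i j a b q p2])
  \/ [/\ k = 4%N, a != b & (((i:nat) == 1%N) && ((j:nat) == 3%N)) || ((i == 3%N :> nat) && (j == 1%N :> nat))].
Proof.
have twoC : forall q : 'I_m, q != a -> q != b ->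
    exists q : 'I_m, exists p1 p2 : 'I_k.+1,
      [/\ p1 != p2, freeP i j a b q p1 & freeP i j a b q p2].
  move=> q Ha Hb; exists q.
  have [p1 Hp1 Hn1] := avoid [:: val i; val j].
  have [p2 Hp2 Hn2] := avoid [:: p1; val i; val j].
  have k3 : (3 <= k)%N by lia.
  move: Hp1 Hp2 Hn1 Hn2; rewrite !inE /= => Hp1 Hp2 Hn1 Hn2.
  exists (inord p1), (inord p2).
  split; rewrite ?/freeP -?val_eqE /= ?inordK ?Ha ?Hb /= ?andbT; lia.
have [c Hc Hnc] := avoid [:: val a; val b].
move: Hc Hnc; rewrite !inE /= => Hc Hnc.
case: (ltnP c m) => Hcm.
  left; apply: (twoC (Ordinal Hcm)); rewrite -val_eqE /=; lia.
have m2 : m = 2%N by lia.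
have k4 : (4 <= k)%N by lia.
case: (eqVneq a b) => [Hab|Hab].
  subst b.
  have [c1 Hc1 Hnc1] := avoid [:: val a].
  move: Hc1 Hnc1; rewrite !inE /= => Hc1 Hnc1.
  have Hc1m : (c1 < m)%N by lia.
  left; apply: (twoC (Ordinal Hc1m)); rewrite -val_eqE /=; lia.
case: (ltnP 4 k) => Hk5.
  left; exists a.
  have [p1 Hp1 Hn1] := avoid [:: val i; val j; (val i).+1; (val i).-1].
  have [p2 Hp2 Hn2] := avoid [:: p1; val i; val j; (val i).+1; (val i).-1].
  have Hn2' : p2 \notin [:: val i; val j; (val i).+1; (val i).-1].
    by move: Hn2; rewrite inE negb_or => /andP [].
  have Hne : p2 != p1 by move: Hn2; rewrite inE negb_or => /andP [].
  move: Hp1 Hp2 => /= Hp1 Hp2.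
  exists (inord p1), (inord p2).
  rewrite !freeP_a // !inordK; try lia.
  split; [|exact: notin4|exact: notin4].
  by rewrite -val_eqE /= !inordK ?(eq_sym p1) //; lia.
have k4' : k = 4%N by lia.
have Hi5 : nat_of_ord i \in iota 0 5 by rewrite mem_iota; have := ltn_ord i; lia.
have Hj5 : nat_of_ord j \in iota 0 5 by rewrite mem_iota; have := ltn_ord j; lia.
have := allP (allP bf _ Hi5) _ Hj5.
case/orP => [Hbad|]; first by right; split.
case/hasP => p1 Hp1 /hasP [p2 Hp2 /andP [Hne Hcol]].
move: Hp1 Hp2; rewrite !mem_iota /= => Hp1 Hp2.
left.
case/orP: Hcol => /andP [F1 F2].
  exists a, (inord p1), (inord p2).
  rewrite !freeP_a // !inordK; try lia.
  by split => //; rewrite -val_eqE /= !inordK //; lia.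
exists b, (inord p1), (inord p2).
rewrite !freeP_b // !inordK; try lia.
by split => //; rewrite -val_eqE /= !inordK //; lia.
Qed.

Lemma bilin0 (R : realType) (U : lmodType R) n1 n2 (f : 'M[R]_(n1,n2) -> 'M[R]_(n1,n2) -> U) :
  (forall c v1 v2 w, f (c *: v1 + v2) w = c *: f v1 w + f v2 w) ->
  (forall v w, f v w = - f w v) ->
  (forall i a j b, f (delta_mx i a) (delta_mx j b) = 0) -> forall v w, f v w = 0.
Proof.
move=> Hl Ha H0.
have f0 : forall w, f 0 w = 0.
  move=> w; have h := Hl 1 0 0 w; rewrite scaler0 addr0 scale1r in h.
  by apply: (@addrI _ (f 0 w)); rewrite addr0 -h.
have fD : forall w v1 v2, f (v1 + v2) w = f v1 w + f v2 w.
  move=> w v1 v2; have h := Hl 1 v1 v2 w; rewrite !scale1r in h; exact h.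
have fZ : forall w c v, f (c *: v) w = c *: f v w.
  by move=> w c v; rewrite -[c *: v]addr0 Hl f0 addr0.
have flin : forall w, (forall i a, f (delta_mx i a) w = 0) -> forall v, f v w = 0.
  move=> w Hw v; rewrite [v]matrix_sum_delta.
  rewrite (big_morph (fun v => f v w) (fD w) (f0 w)).
  apply: big1 => i _.
  rewrite (big_morph (fun v => f v w) (fD w) (f0 w)).
  apply: big1 => j _.
  by rewrite fZ Hw scaler0.
move=> v w; apply: (flin) => i a.
rewrite Ha; apply/eqP; rewrite oppr_eq0; apply/eqP; apply: (flin) => j b; exact: H0.
Qed.

Section T.
Variables (R : realType) (k m : nat).
Variables phi psi : Vsp R k m -> Vsp R k m -> 'M[R]_2 * 'M[R]_m.
Hypotheses (Hphi : is_Hom2 phi) (Hpsi : is_Hom2 psi).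
Hypothesis Hsp : forall v1 v2 v3, spencer2 phi v1 v2 v3 = spencer2 psi v1 v2 v3.
Definition D1 v w := (phi v w).1 - (psi v w).1.
Definition D2 v w := (phi v w).2 - (psi v w).2.
Local Notation e i a := (delta_mx i a : Vsp R k m).
Local Notation GD x y := (G (D1 x y) (D2 x y)).

Lemma EQ (i j l : 'I_k.+1) (a b c : 'I_m) p q :
 - GD (e j b) (e l c) i a p q + GD (e i a) (e l c) j b p q
 - GD (e i a) (e j b) l c p q = 0.
Proof.
have := congr1 (fun M : Vsp R k m => M p q) (Hsp (e i a) (e j b) (e l c)).
have E : forall M N P : Vsp R k m, (- M + N - P) p q = - M p q + N p q - P p q.
  by move=> M N P; rewrite !mxE.
rewrite /spencer2 !E !act_delta /D1 /D2 !GB => H.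
lra.
Qed.

Lemma D1tr v w : D1 v w 0 0 + D1 v w 1 1 = 0.
Proof.
case: Hphi => _ _ /(_ v w); case: Hpsi => _ _ /(_ v w).
rewrite /in_a !tr2 /D1 !mxE => H1 H2. lra.
Qed.

Lemma D1anti v w : D1 v w = - D1 w v.
Proof.
rewrite /D1; case: Hphi => _ /(_ v w) -> _; case: Hpsi => _ /(_ v w) -> _.
rewrite /= opprK opprB addrC. reflexivity.
Qed.

Lemma free_eq (i j : 'I_k.+1) (a b : 'I_m) l c (p : 'I_k.+1) q :
  freeP i j a b q p -> GD (e i a) (e j b) l c p q = 0.
Proof.
move=> /and4P [Hi Hj Ha Hb]. have := EQ i j l a b c p q.
rewrite (vanish _ _ Hi Ha) (vanish _ _ Hj Hb) => H. lra.
Qed.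
Hypothesis Hkm : (3 <= m)%N /\ (3 <= k)%N \/ m = 2%N /\ (4 <= k)%N.

Lemma mx2E (A : 'M[R]_2) : A 0 0 = 0 -> A 0 1 = 0 -> A 1 0 = 0 -> A 1 1 = 0 -> A = 0.
Proof.
move=> H00 H01 H10 H11; apply/matrixP => r s; rewrite mxE.
have hr : r = 0 \/ r = 1.
  by case: r => [[|[|r]] Hr]; [left|right|]; try apply: val_inj.
have hs : s = 0 \/ s = 1.
  by case: s => [[|[|s]] Hs]; [left|right|]; try apply: val_inj.
by case: hr => ->; case: hs => ->.
Qed.

Lemma goodA (i j : 'I_k.+1) (a b : 'I_m) :
  (exists q : 'I_m, exists p1 p2 : 'I_k.+1,
      [/\ p1 != p2, freeP i j a b q p1 & freeP i j a b q p2]) ->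
  D1 (e i a) (e j b) = 0.
Proof.
case=> q [p1 [p2 [Hne F1 F2]]].
have Hf : forall l c (p : 'I_k.+1) q, freeP i j a b q p ->
    G (D1 (e i a) (e j b)) (D2 (e i a) (e j b)) l c p q = 0
  := fun l c p q => @free_eq i j a b l c p q.
have HA := D1tr (e i a) (e j b).
have H00 := ph_c HA Hf F1 F2 Hne.
have H10 : D1 (e i a) (e j b) 1 0 = 0.
  case: (ltnP 0 p1) => Hp1; first by move: (ph_a Hf F1 Hp1) => h; exact h.
  have Hp2 : (0 < p2)%N by move: Hne; rewrite -val_eqE /=; lia.
  by move: (ph_a Hf F2 Hp2) => h; exact h.
have H01 : D1 (e i a) (e j b) 0 1 = 0.
  have := ltn_ord p1; have := ltn_ord p2.
  case: (ltnP p1 k) => Hp1; first by move=> _ _; move: (ph_b Hf F1 Hp1) => h; exact h.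
  move=> h2 h1; have Hp2 : (p2 < k)%N by move: Hne; rewrite -val_eqE /=; lia.
  by move: (ph_b Hf F2 Hp2) => h; exact h.
apply: mx2E => //.
have HA' : D1 (e i a) (e j b) 0 0 + D1 (e i a) (e j b) 1 1 = 0 :> R := HA.
rewrite H00 add0r in HA'; exact: HA'.
Qed.

Lemma badA (i j : 'I_k.+1) (a b : 'I_m) : k = 4%N -> a != b ->
  i = 1%N :> nat -> j = 3%N :> nat -> D1 (e i a) (e j b) = 0.
Proof.
move=> k4 Hab Hi Hj.
have Hf : forall l c (p : 'I_k.+1) q, freeP i j a b q p ->
    G (D1 (e i a) (e j b)) (D2 (e i a) (e j b)) l c p q = 0
  := fun l c p q => @free_eq i j a b l c p q.
have HA : D1 (e i a) (e j b) 0 0 + D1 (e i a) (e j b) 1 1 = 0 :> R := D1tr _ _.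
set p4 : 'I_k.+1 := inord 4. have v4 : (p4 : nat) = 4%N by rewrite inordK // k4.
set p0 : 'I_k.+1 := inord 0. have v0 : (p0 : nat) = 0%N by rewrite inordK.
have F4 : freeP i j a b a p4 by rewrite freeP_a // v4 Hi Hj.
have F0 : freeP i j a b b p0 by rewrite freeP_b // v0 Hi Hj.
have H10 : D1 (e i a) (e j b) 1 0 = 0 :> R.
  have hp : (0 < p4)%N by rewrite v4.
  exact (ph_a Hf F4 hp).
have H01 : D1 (e i a) (e j b) 0 1 = 0 :> R.
  have hp : (p0 < k)%N by rewrite v0 k4.
  exact (ph_b Hf F0 hp).
have E1 := Hf p4 a p4 a F4.
rewrite G_diag (symE_diag _ (erefl _)) v4 in E1.
have e40 : (k - 4)%N = 0%N by rewrite k4.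
rewrite e40 in E1.
have Y0 : D1 (e j b) (e p0 a) = 0.
  case: (comb Hkm j p0 b a) => [tf|[_ _ bad]]; first exact: goodA tf.
  by move: bad; rewrite v0 Hj.
have E2 := EQ i j p0 a b a p0 a.
rewrite Y0 G0 in E2; last by rewrite -val_eqE /= v0 Hi.
rewrite (@vanish _ _ _ _ _ j p0 b a) in E2; last by rewrite Hab.
2: by rewrite v0 Hj.
rewrite G_diag (symE_diag _ (erefl _)) v0 in E2.
have e04 : (k - 0)%N = 4%N by rewrite k4.
rewrite e04 in E2.
have E1' : 0%:R * D1 (e i a) (e j b) 0 0 + 4%:R * D1 (e i a) (e j b) 1 1
   + D2 (e i a) (e j b) a a = 0 :> R := E1.
have E2' : - 0 + 0 - (4%:R * D1 (e i a) (e j b) 0 0 + 0%:R * D1 (e i a) (e j b) 1 1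
   + D2 (e i a) (e j b) a a) = 0 :> R := E2.
have H00 : D1 (e i a) (e j b) 0 0 = 0 :> R by lra.
apply: mx2E => //; lra.
Qed.

Lemma allA (i j : 'I_k.+1) (a b : 'I_m) : D1 (e i a) (e j b) = 0.
Proof.
case: (comb Hkm i j a b) => [tf|[k4 Hab Hbad]]; first exact: goodA tf.
case/orP: Hbad => /andP [/eqP Hi /eqP Hj]; first exact: badA k4 Hab Hi Hj.
have Hba : b != a by rewrite eq_sym.
by rewrite D1anti (badA k4 Hba Hj Hi) oppr0.
Qed.

Lemma allB (i j : 'I_k.+1) (a b : 'I_m) : D2 (e i a) (e j b) = 0.
Proof.
apply/matrixP => q c; rewrite [RHS]mxE.
have [l Hl Hnl] := avoid [:: nat_of_ord i; nat_of_ord j].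
move: Hl Hnl; rewrite !inE /= => Hl Hnl.
have k2 : (l < k.+1)%N by case: Hkm; lia.
have E := EQ i j (Ordinal k2) a b c (Ordinal k2) q.
rewrite !allA G0diag !G0 in E; try (rewrite -val_eqE /=; lia).
have E' : - 0 + 0 - D2 (e i a) (e j b) q c = 0 :> R := E.
lra.
Qed.

Lemma D1lin c v1 v2 w : D1 (c *: v1 + v2) w = c *: D1 v1 w + D1 v2 w.
Proof.
case: Hphi => H _ _; case: Hpsi => H' _ _.
rewrite /D1 H H' /= scalerBr opprD addrACA. reflexivity.
Qed.

Lemma D2lin c v1 v2 w : D2 (c *: v1 + v2) w = c *: D2 v1 w + D2 v2 w.
Proof.
case: Hphi => H _ _; case: Hpsi => H' _ _.
rewrite /D2 H H' /= scalerBr opprD addrACA. reflexivity.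
Qed.

Lemma D2anti v w : D2 v w = - D2 w v.
Proof.
rewrite /D2; case: Hphi => _ /(_ v w) -> _; case: Hpsi => _ /(_ v w) -> _.
rewrite /= opprK opprB addrC. reflexivity.
Qed.

Lemma main v w : phi v w = psi v w.
Proof.
have h1 := bilin0 D1lin D1anti (fun i a j b => allA i j a b) v w.
have h2 := bilin0 D2lin D2anti (fun i a j b => allB i j a b) v w.
rewrite [phi v w]surjective_pairing [psi v w]surjective_pairing.
by congr pair; apply/eqP; rewrite -subr_eq0; apply/eqP.
Qed.
End T.

Theorem lemma4 (R : realType) (k m : nat) :
  ((3 <= m)%N /\ (3 <= k)%N \/ m = 2%N /\ (4 <= k)%N) ->
  forall phi psi : Vsp R k m -> Vsp R k m -> 'M[R]_2 * 'M[R]_m,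
    is_Hom2 phi -> is_Hom2 psi ->
    (forall v1 v2 v3 : Vsp R k m, spencer2 phi v1 v2 v3 = spencer2 psi v1 v2 v3) ->
    forall v w : Vsp R k m, phi v w = psi v w.
Proof.
move=> Hkm phi psi Hphi Hpsi Hsp v w.
exact: (main Hphi Hpsi Hsp Hkm).
Qed.
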